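(* Let $A \in\mathbb{C}^{n\times n}$, and fix $A^-\in A\{1\}$ and $A^{GD}\in A\{GD\}$. Then $A^{1GD}=A^-AA^{GD}$ is the unique matrix $X\in\mathbb{C}^{n\times n}$ satisfying $$AX = P_{R(A),N(AA^{GD})} \quad\text{and}\quad R(X)\subseteq R(A^{-}A).$$
   Context: For $A\in\mathbb{C}^{n\times n}$, $ind(A)$ is the smallest nonnegative integer $k$ with $\mathrm{rank}(A^k)=\mathrm{rank}(A^{k+1})$. $A\{1\}$ is the set of matrices $X$ with $AXA=A$. With $k=ind(A)$, $A\{GD\}$ is the set of G-Drazin inverses of $A$: matrices $X$ with $AXA=A$, $XA^{k+1}=A^k$, $A^{k+1}X=A^k$. $R(\cdot)$, $N(\cdot)$ denote range and null space; $P_{S,T}$ is the projector onto $S$ along $T$. *)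

(* Defs.v *)
From HB Require Import structures.
From mathcomp Require Import all_boot all_order all_algebra.
Set Implicit Arguments. Unset Strict Implicit. Unset Printing Implicit Defensive.
Import Order.TTheory GRing.Theory Num.Theory.
Local Open Scope ring_scope.

(* ind(A): smallest k with rank(A^k) = rank(A^(k+1)).  Such a k <= n always
   exists, so searching in 0..n gives exactly the smallest one. *)
Definition ind (R : fieldType) (n : nat) (A : 'M[R]_n) : nat :=
  find (fun k => \rank (A ^+ k) == \rank (A ^+ k.+1)) (iota 0 n.+1).

Definition is_inner_inverse (R : fieldType) (n : nat) (A X : 'M[R]_n) : Prop :=
  A *m X *m A = A.

Definition is_GDrazin_inverse (R : fieldType) (n : nat) (A X : 'M[R]_n) : Prop :=
  let k := ind A in
  [/\ A *m X *m A = A, X *m A ^+ k.+1 = A ^+ k & A ^+ k.+1 *m X = A ^+ k].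

Definition in_range (R : fieldType) (n : nat) (M : 'M[R]_n) (v : 'cV[R]_n) : Prop :=
  exists w : 'cV[R]_n, v = M *m w.
Definition in_null (R : fieldType) (n : nat) (M : 'M[R]_n) (v : 'cV[R]_n) : Prop :=
  M *m v = 0.

Definition range_sub (R : fieldType) (n : nat) (X Y : 'M[R]_n) : Prop :=
  forall v, in_range X v -> in_range Y v.

Definition is_projector_onto_along (R : fieldType) (n : nat) (P : 'M[R]_n)
  (S T : 'cV[R]_n -> Prop) : Prop :=
  [/\ P *m P = P,
      forall v, S v <-> in_range P v
    & forall v, T v <-> in_null P v].

(* Main.v *)
Require Import Defs.
From HB Require Import structures.
From mathcomp Require Import all_boot all_order all_algebra.
Import GRing.Theory Num.Theory.
Local Open Scope ring_scope.

Lemma mx_ext_cV (C : fieldType) (n : nat) (P Q : 'M[C]_n) :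
  (forall v : 'cV[C]_n, P *m v = Q *m v) -> P = Q.
Proof.
move=> H; apply/matrixP => i j.
have := congr1 (fun M : 'cV[C]_n => M i 0) (H (delta_mx j 0)).
by rewrite -!colE !mxE.
Qed.

Theorem theorem3p4 (C : numClosedFieldType) (n : nat) (A Am Agd : 'M[C]_n) :
  is_inner_inverse A Am -> is_GDrazin_inverse A Agd ->
  let X1GD := Am *m A *m Agd in
  (is_projector_onto_along (A *m X1GD) (in_range A) (in_null (A *m Agd))
   /\ range_sub X1GD (Am *m A))
  /\ (forall X : 'M[C]_n,
        is_projector_onto_along (A *m X) (in_range A) (in_null (A *m Agd)) ->
        range_sub X (Am *m A) -> X = X1GD).
Proof.
move=> HM [HG _ _] /=; set X1 := Am *m A *m Agd.
rewrite /is_inner_inverse in HM.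
have AX1 : A *m X1 = A *m Agd by rewrite /X1 !mulmxA HM.
have QQ : (A *m Agd) *m (A *m Agd) = A *m Agd by rewrite mulmxA HG.
have MAMA : (Am *m A) *m (Am *m A) = Am *m A by rewrite -mulmxA (mulmxA A Am A) HM.
split; first split.
- rewrite AX1; split => //.
  + move=> v; split.
    * case=> w ->; exists (A *m w); by rewrite mulmxA HG.
    * case=> w ->; exists (Agd *m w); by rewrite mulmxA.
- move=> v [w ->]; exists (Agd *m w); by rewrite /X1 mulmxA.
move=> X [PP HS HT] Hsub.
have AXQ : A *m X = A *m Agd.
  apply: mx_ext_cV => v.
  have h1 : A *m X *m (A *m Agd *m v) = A *m Agd *m v.
    have [w Hw] : in_range (A *m X) (A *m Agd *m v).
      by apply/HS; exists (Agd *m v); rewrite mulmxA.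
    by rewrite Hw mulmxA PP.
  have h2 : in_null (A *m Agd) (v - A *m Agd *m v).
    by rewrite /in_null mulmxBr mulmxA QQ subrr.
  move/HT: h2; rewrite /in_null mulmxBr => /eqP; rewrite subr_eq0 => /eqP ->.
  by rewrite h1.
apply: mx_ext_cV => v.
have [w Hw] : in_range (Am *m A) (X *m v) by apply: Hsub; exists v.
have E : X *m v = Am *m A *m (X *m v) by rewrite Hw mulmxA MAMA.
by rewrite E /X1 -!mulmxA (mulmxA A X) AXQ !mulmxA.
Qed.
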